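(* Assume that for every $t\in\mathcal T$ and every $\underline\pi_t\in\times_{j\in\mathcal N}\mathcal P(\mathcal X^j)$ the fixed-point condition of the backward recursion (see context) has a solution, so that the equilibrium generating function $\theta$ and the value functions $V^i_t$ are well defined, and let $(\beta^*,\mu^* )$ be produced by the forward recursion. Then $(\beta^*,\mu^* )$ is a perfect Bayesian equilibrium. In particular, for every $i\in\mathcal N$, every $t\in\mathcal T$, every public history $a_{1:t-1}\in\mathcal A^{t-1}$, every private history $x^i_{1:t}\in(\mathcal X^i)^t$ and every (general behavioral) strategy $\beta^i$ of player $i$, $$\mathbb E^{\beta^{*,i}_{t:T}\beta^{*,-i}_{t:T},\,\mu^*_t[a_{1:t-1}]}\Big\{\sum_{n=t}^T R^i(X_n,A_n)\,\Big|\,a_{1:t-1},x^i_{1:t}\Big\}\;\ge\;\mathbb E^{\beta^{i}_{t:T}\beta^{*,-i}_{t:T},\,\mu^*_t[a_{1:t-1}]}\Big\{\sum_{n=t}^T R^i(X_n,A_n)\,\Big|\,a_{1:t-1},x^i_{1:t}\Big\}.$$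
   Context: Model: players $\mathcal N=\{1,\dots,N\}$, horizon $\mathcal T=\{1,\dots,T\}$. Player $i$ has a finite type set $\mathcal X^i$ and a finite action set $\mathcal A^i$; $\mathcal X=\times_i\mathcal X^i$, $\mathcal A=\times_i\mathcal A^i$. Types evolve as $P(x_1)=\prod_i Q^i_1(x^i_1)$ and $P(x_{t+1}\mid x_{1:t},a_{1:t})=\prod_i Q^i_{t+1}(x^i_{t+1}\mid x^i_t,a_t)$ for known kernels $Q^i_{t}$ (each kernel may depend on the full action profile $a_t$; $Q^i_{T+1}$ is an arbitrary kernel, irrelevant for rewards). Player $i$ privately observes its own types; all actions are publicly observed, so at time $t$ player $i$ knows $(a_{1:t-1},x^i_{1:t})$. A behavioral strategy of player $i$ gives $\beta^i_t(\cdot\mid a_{1:t-1},x^i_{1:t})\in\mathcal P(\mathcal A^i)$; players randomize independently given their information. Player $i$ receives reward $R^i(x_t,a_t)$ at each time $t$. Notation: $-i$ denotes all players except $i$; $\mathcal P(S)$ is the set of probability distributions on $S$. Belief update: for $\pi^i\in\mathcal P(\mathcal X^i)$, a prescription $\gamma^i:\mathcal X^i\to\mathcal P(\mathcal A^i)$ (written $\gamma^i(a^i|x^i)$), $a\in\mathcal A$ and $t\in\mathcal T$, let $\bar F_t(\pi^i,\gamma^i,a)(y)=\frac{\sum_{x}\pi^i(x)\gamma^i(a^i|x)Q^i_{t+1}(y|x,a)}{\sum_x\pi^i(x)\gamma^i(a^i|x)}$ for $y\in\mathcal X^i$ if the denominator is positive, and $\bar F_t(\pi^i,\gamma^i,a)(y)=\sum_x\pi^i(x)Q^i_{t+1}(y|x,a)$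 otherwise. For $\underline\pi=(\pi^j)_{j}$ and $\gamma=(\gamma^j)_j$, $F_t(\underline\pi,\gamma,a)=(\bar F_t(\pi^j,\gamma^j,a))_{j\in\mathcal N}$. Backward recursion: $V^i_{T+1}\equiv0$. For $t=T,\dots,1$ and each $\underline\pi_t=(\pi^j_t)_j\in\times_j\mathcal P(\mathcal X^j)$, $\theta_t[\underline\pi_t]=\tilde\gamma_t=(\tilde\gamma^j_t)_j$ (each $\tilde\gamma^j_t:\mathcal X^j\to\mathcal P(\mathcal A^j)$) is a solution of the following fixed-point condition: for every $i$ and every $x^i\in\mathcal X^i$, $\tilde\gamma^i_t(\cdot|x^i)$ maximizes over $\gamma^i(\cdot|x^i)\in\mathcal P(\mathcal A^i)$ the quantity $$W^i_t(\gamma^i(\cdot|x^i))=\sum_{x^{-i},a,y}\Big[\prod_{j\ne i}\pi^j_t(x^j)\Big]\gamma^i(a^i|x^i)\Big[\prod_{j\ne i}\tilde\gamma^j_t(a^j|x^j)\Big]Q^i_{t+1}(y|x^i,a)\Big[R^i((x^i,x^{-i}),a)+V^i_{t+1}\big(F_t(\underline\pi_t,\tilde\gamma_t,a),y\big)\Big]$$ (the belief update inside uses $\tilde\gamma_t$, not the maximization variable); $\theta_t$ selects one such solution for each $\underline\pi_t$. Then $V^i_t(\underline\pi_t,x^i)=W^i_t(\tilde\gamma^i_t(\cdot|x^i))$. Forward recursion: $\mu^{*,i}_1[\emptyset]=Q^i_1$. For $t=1,\dots,T$ and every public history: $\underline\mu^*_t[a_{1:t-1}]=(\mu^{*,j}_t[a_{1:t-1}])_j$,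 $\mu^*_t[a_{1:t-1}](x)=\prod_j\mu^{*,j}_t[a_{1:t-1}](x^j)$; $\beta^{*,i}_t(a^i_t\mid a_{1:t-1},x^i_{1:t})=\theta^i_t[\underline\mu^*_t[a_{1:t-1}]](a^i_t\mid x^i_t)$; $\mu^{*,i}_{t+1}[a_{1:t}]=\bar F_t\big(\mu^{*,i}_t[a_{1:t-1}],\theta^i_t[\underline\mu^*_t[a_{1:t-1}]],a_t\big)$. All players use the common belief $\mu^*_t[a_{1:t-1}]$; player $i$'s belief on $x^{-i}_t$ is $\prod_{j\ne i}\mu^{*,j}_t[a_{1:t-1}]$. Conditional expectation notation: for a strategy $\beta^i$ of player $i$, $\mathbb E^{\beta^i_{t:T}\beta^{*,-i}_{t:T},\,\mu^*_t[a_{1:t-1}]}\{\cdot\mid a_{1:t-1},x^i_{1:t}\}$ is the expectation under the process in which $X^i_t=x^i_t$, $X^{-i}_t\sim\prod_{j\ne i}\mu^{*,j}_t[a_{1:t-1}]$, and for $n=t,\dots,T$, given everything realized so far (public history $a_{1:n-1}$ extending the given one, private history $x^i_{1:n}$ extending the given $x^i_{1:t}$), $A^i_n\sim\beta^i_n(\cdot|a_{1:n-1},x^i_{1:n})$ and $A^j_n\sim\beta^{*,j}_n(\cdot|a_{1:n-1},X^j_n)$ independently for $j\ne i$, and $X^j_{n+1}\sim Q^j_{n+1}(\cdot|X^j_n,A_n)$ independently over $j$. *)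

(* Defs.v *)
From HB Require Import structures.
From mathcomp Require Import all_boot all_order all_algebra.
Unset Implicit Arguments. Unset Strict Implicit. Unset Printing Implicit Defensive.
Import Order.TTheory GRing.Theory Num.Theory.
Local Open Scope ring_scope.

Definition isDist {R : realFieldType} {S : finType} (p : S -> R) : Prop :=
  (forall s, 0 <= p s) /\ \sum_(s : S) p s = 1.

Section Game.
(* players 'I_N (player k+1 of the paper is index k), horizon T,
   type sets X j, action sets A j, probabilities/rewards valued in R *)
Context {R : realFieldType} {N : nat} {X A : 'I_N -> finType}.

Definition Xprof := {dffun forall j : 'I_N, X j}.
Definition Aprof := {dffun forall j : 'I_N, A j}.

(* Q j t x a y = Q^j_t(y | x, a) (for t >= 2); Q1 j = Q^j_1 *)
Variable Q : forall (j : 'I_N), nat -> X j -> Aprof -> X j -> R.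
Variable Rw : 'I_N -> Xprof -> Aprof -> R.

Definition belief := forall j : 'I_N, X j -> R.
Definition presc := forall j : 'I_N, X j -> A j -> R.

Definition Fbar (t : nat) (j : 'I_N) (pi : X j -> R) (g : X j -> A j -> R)
    (a : Aprof) : X j -> R :=
  fun y =>
    let d := \sum_(x : X j) pi x * g x (a j) in
    if 0 < d then (\sum_(x : X j) pi x * g x (a j) * Q j t.+1 x a y) / d
    else \sum_(x : X j) pi x * Q j t.+1 x a y.

Definition Fvec (t : nat) (pi : belief) (g : presc) (a : Aprof) : belief :=
  fun j => Fbar t j (pi j) (g j) a.

(* W^i_t(gi) given pi_t, the candidate fixed point gt = tilde gamma_t,
   the continuation value V_{t+1} (Vn i pi y = V^i_{t+1}(pi, y)) and x^i. *)
Definition Wfun (t : nat) (Vn : forall i : 'I_N, belief -> X i -> R)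
    (pi : belief) (gt : presc) (i : 'I_N) (xi : X i) (gi : A i -> R) : R :=
  \sum_(x : Xprof | x i == xi) \sum_(a : Aprof) \sum_(y : X i)
    (\prod_(j | j != i) pi j (x j)) * gi (a i)
    * (\prod_(j | j != i) gt j (x j) (a j)) * Q i t.+1 xi a y
    * (Rw i x a + Vn i (Fvec t pi gt a) y).

(* theta / V form a solution of the backward recursion (theta selects, for
   every t in 1..T and every product belief, a solution of the fixed-point
   condition, and V is the resulting value function). *)
Definition backward_recursion (T : nat) (theta : nat -> belief -> presc)
    (V : nat -> forall i : 'I_N, belief -> X i -> R) : Prop :=
  (forall i pi x, V T.+1 i pi x = 0) /\
  (forall t, (1 <= t <= T)%N -> forall pi : belief, (forall j, isDist (pi j)) ->
     [/\ (forall j (x : X j), isDist (theta t pi j x)),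
         (forall i (x : X i) (g : A i -> R), isDist g ->
            Wfun t (V t.+1) pi (theta t pi) i x g
            <= Wfun t (V t.+1) pi (theta t pi) i x (theta t pi i x)) &
         (forall i (x : X i),
            V t i pi x = Wfun t (V t.+1) pi (theta t pi) i x (theta t pi i x))]).

(* forward recursion: mu^*_t[a_{1:t-1}] where t = size ah + 1 *)
Fixpoint mu_from (theta : nat -> belief -> presc) (t : nat) (m : belief)
    (ah : seq Aprof) : belief :=
  match ah with
  | [::] => m
  | a :: ah' => mu_from theta t.+1 (Fvec t m (theta t m) a) ah'
  end.

Definition mustar (Q1 : forall j : 'I_N, X j -> R)
    (theta : nat -> belief -> presc) (ah : seq Aprof) : belief :=
  mu_from theta 1 Q1 ah.

(* A behavioral strategy of player i:
   strat n a_{1:n-1} x^i_{1:n-1} x^i_n a^i = beta^i_n(a^i | a_{1:n-1}, x^i_{1:n}). *)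
Definition strategy (i : 'I_N) := nat -> seq Aprof -> seq (X i) -> X i -> A i -> R.

Definition is_strategy (i : 'I_N) (beta : strategy i) : Prop :=
  forall n ah xp x, isDist (beta n ah xp x).

Definition betastar (Q1 : forall j : 'I_N, X j -> R)
    (theta : nat -> belief -> presc) (i : 'I_N) : strategy i :=
  fun n ah _ x ai => theta n (mustar Q1 theta ah) i x ai.

(* Expected reward to go sum_{m=n}^{n+k-1} R^i(X_m, A_m), with k steps left,
   starting at time n with public history ah = a_{1:n-1}, past private types
   xp = x^i_{1:n-1} of player i and current type profile x = X_n, player i
   using beta and the others using beta^* (which only depends on their
   current type). *)
Fixpoint rtg (Q1 : forall j : 'I_N, X j -> R) (theta : nat -> belief -> presc)
    (i : 'I_N) (beta : strategy i) (k n : nat) (ah : seq Aprof) (xp : seq (X i))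
    (x : Xprof) {struct k} : R :=
  match k with
  | 0 => 0
  | k'.+1 =>
    \sum_(a : Aprof)
      (beta n ah xp (x i) (a i)
       * \prod_(j | j != i) betastar Q1 theta j n ah [::] (x j) (a j))
      * (Rw i x a
         + \sum_(x' : Xprof) (\prod_(j : 'I_N) Q j n.+1 (x j) a (x' j))
             * rtg Q1 theta i beta k' n.+1 (rcons ah a) (rcons xp (x i)) x')
  end.

(* E^{beta^i_{t:T} beta^{*,-i}_{t:T}, mu^*_t[a_{1:t-1}]}
     { sum_{n=t}^T R^i(X_n, A_n) | a_{1:t-1}, x^i_{1:t} }
   with x^i_{1:t} = rcons xp xi. *)
Definition cond_exp (T : nat) (Q1 : forall j : 'I_N, X j -> R)
    (theta : nat -> belief -> presc) (i : 'I_N) (beta : strategy i) (t : nat)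
    (ah : seq Aprof) (xp : seq (X i)) (xi : X i) : R :=
  \sum_(x : Xprof | x i == xi)
    (\prod_(j | j != i) mustar Q1 theta ah j (x j))
    * rtg Q1 theta i beta (T.+1 - t) t ah xp x.

End Game.

(* Main.v *)
Require Import Defs.
From HB Require Import structures.
From mathcomp Require Import all_boot all_order all_algebra zify ring.
Import Order.TTheory GRing.Theory Num.Theory.
Local Open Scope ring_scope.

Lemma sumprod (R : comNzRingType) (I : finType) (T_ : I -> finType) (h : forall i, T_ i -> R) :
  \sum_(x : {dffun forall i, T_ i}) \prod_i h i (x i) = \prod_i \sum_(z : T_ i) h i z.
Proof.
have E i : \sum_(z : T_ i) h i z = \sum_(z : T_ i) [ffun z => h i z] z.
  by apply: eq_bigr => z _; rewrite ffunE.
under eq_bigr => i _ do rewrite E (big_tag (fun i => [ffun z => h i z]) i).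
rewrite bigA_distr_big_dep.
rewrite -(big_fprod _ _ (fun i => [ffun z => h i z])).
rewrite (reindex (@dffun_of_fprod I T_)); last exact/onW_bij/dffun_of_fprod_bij.
apply: eq_bigr => t _; apply: eq_bigr => i _.
by rewrite /dffun_of_fprod !ffunE.
Qed.

Lemma sumprodL (R : comNzRingType) (I : finType) (T_ : I -> finType) (i : I) (xi : T_ i)
  (k : forall j, T_ j -> R) :
  \sum_(x : {dffun forall j, T_ j} | x i == xi) \prod_(j | j != i) k j (x j)
  = \prod_(j | j != i) \sum_(z : T_ j) k j z.
Proof.
have [h [hin hout]] : exists h : forall j, T_ j -> R,
   (forall z, h i z = (z == xi)%:R) /\ (forall j z, j != i -> h j z = k j z).
  exists (@dfwith I (fun j => T_ j -> R) k i (fun z => (z == xi)%:R)); split.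
    by move=> z; rewrite dfwith_in.
  by move=> j z ji; rewrite dfwith_out // eq_sym.
have E : \sum_(x : {dffun forall j, T_ j}) \prod_j h j (x j)
    = (\sum_z h i z) * \prod_(j | j != i) \sum_(z : T_ j) h j z.
  by rewrite sumprod (bigD1 i).
have S1 : \sum_(z : T_ i) h i z = 1.
  rewrite (bigD1 xi) //=. rewrite (hin xi) eqxx big1 ?addr0 // => z zx.
  by rewrite hin (negbTE zx).
rewrite S1 mul1r in E.
rewrite (eq_bigr (fun j => \sum_z h j z)); last first.
  by move=> j ji; apply: eq_bigr => z _; rewrite hout.
rewrite -E big_mkcond /=; apply: eq_bigr => x _.
rewrite [RHS](bigD1 i) //= hin; case: eqP => _; rewrite ?mul1r ?mul0r //.
by apply: eq_bigr => j ji; rewrite hout.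
Qed.

Section G.
Variables (R : realFieldType) (N T : nat) (X A : 'I_N -> finType).
Variables (Q1 : forall j : 'I_N, X j -> R)
  (Q : forall j : 'I_N, nat -> X j -> @Aprof N A -> X j -> R)
  (Rw : 'I_N -> @Xprof N X -> @Aprof N A -> R)
  (hQ : forall j t (x : X j) (a : @Aprof N A), isDist (Q j t x a))
  (theta : nat -> @belief R N X -> @presc R N X A).

Lemma mu_from_rcons t m ah a :
  mu_from Q theta t m (rcons ah a) =
  Fvec Q (t + size ah) (mu_from Q theta t m ah)
       (theta (t + size ah) (mu_from Q theta t m ah)) a.
Proof.
elim: ah t m => [|b ah IH] t m /=; first by rewrite addn0.
by rewrite IH addSnnS.
Qed.

Lemma Fbar_dist t j (pi : X j -> R) g a :
  isDist pi -> (forall x, isDist (g x)) -> isDist (Fbar Q t j pi g a).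
Proof.
move=> [p0 p1] hg; rewrite /Fbar.
have g0 x b : 0 <= g x b by case: (hg x).
case: (boolP (0 < \sum_x pi x * g x (a j))) => dpos; split.
- move=> y; rewrite /Fbar /=.  apply: divr_ge0; last exact: ltW.
  apply: sumr_ge0 => x _; apply: mulr_ge0; [exact: mulr_ge0|by case: (hQ j t.+1 x a)].
- under eq_bigr => y _ do rewrite /Fbar /=.
  rewrite -big_distrl /= exchange_big /=.
  under eq_bigr => x _ do rewrite -big_distrr /= (hQ j t.+1 x a).2 mulr1.
  by rewrite mulfV // lt0r_neq0.
- move=> y; rewrite /Fbar /=.
  apply: sumr_ge0 => x _; apply: mulr_ge0 => //; by case: (hQ j t.+1 x a).
- under eq_bigr => y _ do rewrite /Fbar /=.
  rewrite exchange_big /=.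
  by under eq_bigr => x _ do rewrite -big_distrr /= (hQ j t.+1 x a).2 mulr1.
Qed.

Lemma Fbar_mul t j (pi : X j -> R) (g : X j -> A j -> R) (a : @Aprof N A) (w : X j) :
  (forall x, 0 <= pi x) -> (forall x b, 0 <= g x b) ->
  \sum_z pi z * g z (a j) * Q j t.+1 z a w
  = (\sum_z pi z * g z (a j)) * Fbar Q t j pi g a w.
Proof.
move=> p0 g0; rewrite /Fbar /=; case: ifP => dpos.
  by rewrite [RHS]mulrC divfK // lt0r_neq0.
have d0 : \sum_z pi z * g z (a j) = 0.
  apply/eqP; have := @sumr_ge0 R _ (index_enum (X j)) xpredT (fun z => pi z * g z (a j)).
  rewrite le0r dpos orbF; apply => z _; exact: mulr_ge0.
rewrite d0 mul0r big1 // => z _.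
have H0 : forall x, xpredT x -> 0 <= pi x * g x (a j) by move=> x _; apply: mulr_ge0.
by rewrite (psumr_eq0P H0 d0) ?mul0r.
Qed.

Lemma key (i : 'I_N) (xi : X i) (h : forall j, X j -> R)
  (q : forall j, X j -> X j -> R) (f : @Xprof N X -> R) :
  \sum_(x : @Xprof N X | x i == xi)
     (\prod_(j | j != i) h j (x j)) *
     \sum_(x' : @Xprof N X) (\prod_j q j (x j) (x' j)) * f x'
  = \sum_(y : X i) q i xi y *
     \sum_(x' : @Xprof N X | x' i == y)
        (\prod_(j | j != i) \sum_z h j z * q j z (x' j)) * f x'.
Proof.
under eq_bigr do rewrite big_distrr /=.
rewrite exchange_big /= (partition_big (fun x' : @Xprof N X => x' i) xpredT) //=.
apply: eq_bigr => y _; rewrite big_distrr /=; apply: eq_bigr => x' /eqP x'y.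
have -> : \prod_(j | j != i) \sum_z h j z * q j z (x' j) =
          \sum_(x : @Xprof N X | x i == xi) \prod_(j | j != i) (h j (x j) * q j (x j) (x' j)).
  by rewrite (@sumprodL R 'I_N X i xi (fun j z => h j z * q j z (x' j))).
rewrite big_distrl big_distrr /=; apply: eq_bigr => x /eqP xxi.
rewrite [X in _ * (X * _) = _](bigD1 i) //= xxi x'y big_split /=; ring.
Qed.

Variable (V : nat -> forall i : 'I_N, @belief R N X -> X i -> R).
Hypothesis hBR : backward_recursion Q Rw T theta V.

Lemma mu_dist ah : forall t m, (1 <= t)%N -> (t + size ah <= T.+1)%N ->
  (forall j, isDist (m j)) -> forall j, isDist (mu_from Q theta t m ah j).
Proof.
elim: ah => [|a ah IH] t m /= ht hs hm; first exact: hm.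
apply: IH; first by [].
  by rewrite addSnnS.
move=> j; apply: Fbar_dist; first exact: hm.
have tT : (1 <= t <= T)%N by apply/andP; split => //; lia.
by have [] := hBR.2 t tT m hm.
Qed.

Lemma rtgS i beta k n ah xp x :
  rtg Q Rw Q1 theta i beta k.+1 n ah xp x =
    \sum_(a : @Aprof N A)
      (beta n ah xp (x i) (a i)
       * \prod_(j | j != i) betastar Q Q1 theta j n ah [::] (x j) (a j))
      * (Rw i x a
         + \sum_(x' : @Xprof N X) (\prod_(j : 'I_N) Q j n.+1 (x j) a (x' j))
             * rtg Q Rw Q1 theta i beta k n.+1 (rcons ah a) (rcons xp (x i)) x').
Proof. by []. Qed.

Definition A1 i (xi : X i) n (mu : @belief R N X) (a : @Aprof N A) :=
  \sum_(x : @Xprof N X | x i == xi)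
     (\prod_(j | j != i) (mu j (x j) * theta n mu j (x j) (a j))) * Rw i x a.
Definition Dm i n (mu : @belief R N X) (a : @Aprof N A) :=
  \prod_(j | j != i) \sum_z mu j z * theta n mu j z (a j).

Lemma stepE i beta n ah xp xi : (1 <= n <= T)%N -> size ah = n.-1 ->
  (forall j z, 0 <= mustar Q Q1 theta ah j z) ->
  (forall j z b, 0 <= theta n (mustar Q Q1 theta ah) j z b) ->
  cond_exp Q Rw T Q1 theta i beta n ah xp xi =
  \sum_(a : @Aprof N A) beta n ah xp xi (a i) *
     (A1 i xi n (mustar Q Q1 theta ah) a + Dm i n (mustar Q Q1 theta ah) a *
       \sum_y Q i n.+1 xi a y *
          cond_exp Q Rw T Q1 theta i beta n.+1 (rcons ah a) (rcons xp xi) y).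
Proof.
move=> /andP[n1 nT] sah m0 g0.
rewrite /cond_exp subSn //.
under eq_bigr do rewrite rtgS.
rewrite subSS.
set mu := mustar Q Q1 theta ah.
have Hm a : mustar Q Q1 theta (rcons ah a) = Fvec Q n mu (theta n mu) a.
  by rewrite /mustar mu_from_rcons sah add1n (prednK n1).
under [RHS]eq_bigr => a _ do rewrite Hm.
under eq_bigr => x /eqP xx do rewrite xx big_distrr.
rewrite exchange_big /=; apply: eq_bigr => a _.
set f := fun x' => rtg Q Rw Q1 theta i beta (T - n) n.+1 (rcons ah a) (rcons xp xi) x'.
have K : Dm i n mu a * \sum_y Q i n.+1 xi a y *
    \sum_(x' : @Xprof N X | x' i == y)
        \prod_(j | j != i) Fvec Q n mu (theta n mu) a j (x' j) * f x'
  = \sum_(x : @Xprof N X | x i == xi)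
      (\prod_(j | j != i) (mu j (x j) * theta n mu j (x j) (a j))) *
      \sum_(x' : @Xprof N X) (\prod_j Q j n.+1 (x j) a (x' j)) * f x'.
  rewrite (key i xi (fun j z => mu j z * theta n mu j z (a j))
                    (fun j z w => Q j n.+1 z a w) f).
  rewrite big_distrr; apply: eq_bigr => y _ /=.
  rewrite mulrCA; congr (_ * _).
  rewrite big_distrr; apply: eq_bigr => x' _ /=.
  rewrite mulrA; congr (_ * _).
  rewrite /Dm -big_split /=; apply: eq_bigr => j _.
  by rewrite /Fvec Fbar_mul.
rewrite K /A1 -big_split big_distrr /=; apply: eq_bigr => x _.
rewrite big_split /= /betastar -/mu; ring.
Qed.

Lemma stepW i xi n (mu : @belief R N X) (gi : A i -> R) :
  Wfun Q Rw n (V n.+1) mu (theta n mu) i xi gi =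
  \sum_(a : @Aprof N A) gi (a i) *
     (A1 i xi n mu a + Dm i n mu a *
       \sum_y Q i n.+1 xi a y * V n.+1 i (Fvec Q n mu (theta n mu) a) y).
Proof.
rewrite /Wfun exchange_big /=; apply: eq_bigr => a _.
rewrite /Dm -(@sumprodL R 'I_N X i xi (fun j z => mu j z * theta n mu j z (a j))).
rewrite /A1 big_distrl -big_split big_distrr /=; apply: eq_bigr => x _.
rewrite big_split /=.
set M1 := \prod_(j | j != i) mu j (x j).
set M2 := \prod_(j | j != i) theta n mu j (x j) (a j).
set W := \sum_y Q i n.+1 xi a y * V n.+1 i (Fvec Q n mu (theta n mu) a) y.
have -> : gi (a i) * (M1 * M2 * Rw i x a + M1 * M2 * W) =
   \sum_y (gi (a i) * (M1 * M2) * Rw i x a * Q i n.+1 xi a y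
           + gi (a i) * (M1 * M2) * (Q i n.+1 xi a y * V n.+1 i (Fvec Q n mu (theta n mu) a) y)).
  by rewrite big_split -!big_distrr /= (hQ i n.+1 xi a).2 -/W; ring.
by apply: eq_bigr => y _; ring.
Qed.

Hypothesis hQ1 : forall j, isDist (Q1 j).

Lemma main_ind i k : forall n, (n + k = T.+1)%N -> (1 <= n)%N ->
  forall ah, size ah = n.-1 -> forall xp xi,
  (forall beta, is_strategy i beta ->
     cond_exp Q Rw T Q1 theta i beta n ah xp xi <= V n i (mustar Q Q1 theta ah) xi)
  /\ cond_exp Q Rw T Q1 theta i (betastar Q Q1 theta i) n ah xp xi
     = V n i (mustar Q Q1 theta ah) xi.
Proof.
elim: k => [|k IH] n nk n1 ah sah xp xi.
  rewrite addn0 in nk; subst n.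
  have CE0 beta : cond_exp Q Rw T Q1 theta i beta T.+1 ah xp xi = 0.
    by rewrite /cond_exp subnn big1 // => x _; rewrite mulr0.
  by rewrite (proj1 hBR) !CE0; split => // beta _; rewrite CE0.
have nT : (1 <= n <= T)%N by apply/andP; split => //; lia.
set mu := mustar Q Q1 theta ah.
have hmu : forall j, isDist (mu j).
  apply: mu_dist => //; first by rewrite sah; lia.
have m0 j z : 0 <= mu j z by case: (hmu j).
have [hg hmax hV] := hBR.2 n nT mu hmu.
have g0 j z b : 0 <= theta n mu j z b by case: (hg j z).
have Hm a : mustar Q Q1 theta (rcons ah a) = Fvec Q n mu (theta n mu) a.
  by rewrite /mustar mu_from_rcons sah add1n (prednK n1).
have IH' a y := IH n.+1 (etrans (addSnnS n k) nk) isT (rcons ah a)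
   (etrans (size_rcons ah a) (etrans (congr1 S sah) (prednK n1))) (rcons xp xi) y.
have D0 a : 0 <= Dm i n mu a.
  by apply: prodr_ge0 => j _; apply: sumr_ge0 => z _; apply: mulr_ge0.
split.
  move=> beta hb; rewrite stepE // (hV i xi).
  apply: le_trans (hmax i xi (beta n ah xp xi) (hb n ah xp xi)).
  rewrite stepW; apply: ler_sum => a _.
  apply: ler_wpM2l; first by case: (hb n ah xp xi).
  rewrite lerD2l; apply: ler_wpM2l => //.
  apply: ler_sum => y _; apply: ler_wpM2l; first by case: (hQ i n.+1 xi a).
  by have [H _] := IH' a y; rewrite -Hm; apply: H.
rewrite stepE // (hV i xi) stepW; apply: eq_bigr => a _.
by under eq_bigr => y _ do rewrite (proj2 (IH' a y)) Hm.
Qed.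
End G.


Theorem theorem1 (R : realFieldType) (N T : nat) (X A : 'I_N -> finType)
  (Q1 : forall j : 'I_N, X j -> R)
  (Q : forall j : 'I_N, nat -> X j -> @Aprof N A -> X j -> R)
  (Rw : 'I_N -> @Xprof N X -> @Aprof N A -> R)
  (hQ1 : forall j, isDist (Q1 j))
  (hQ : forall j t (x : X j) (a : @Aprof N A), isDist (Q j t x a))
  (theta : nat -> @belief R N X -> @presc R N X A)
  (V : nat -> forall i : 'I_N, @belief R N X -> X i -> R)
  (hBR : backward_recursion Q Rw T theta V) :
  forall (i : 'I_N) (t : nat), (1 <= t <= T)%N ->
  forall (ah : seq (@Aprof N A)), size ah = t.-1 ->
  forall (xp : seq (X i)) (xi : X i), size xp = t.-1 ->
  forall beta : @strategy R N X A i, is_strategy i beta ->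
    cond_exp Q Rw T Q1 theta i beta t ah xp xi
    <= cond_exp Q Rw T Q1 theta i (betastar Q Q1 theta i) t ah xp xi.
Proof.
move=> i t /andP[t1 tT] ah sah xp xi _ beta hb.
have tk : (t + (T.+1 - t))%N = T.+1 by lia.
have [H1 H2] := main_ind R N T X A Q1 Q Rw hQ theta V hBR hQ1 i (T.+1 - t) t tk t1 ah sah xp xi.
by rewrite H2; apply: H1.
Qed.
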